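(* Let $g\ge1$, $\alpha,\alpha_1,\dots,\alpha_{2g-1}\in\mathbb C$, $f_{g-1}(x)=\prod_{j=1}^{2g-1}(x-\alpha_j)=\sum_{i=0}^{2g-1}\tilde\mu_{4g-2-2i}x^i$ and $f_g(x)=(x-\alpha)^2f_{g-1}(x)=\sum_{i=0}^{2g+1}\mu_{4g+2-2i}x^i$ (with coefficients of indices outside these ranges set to $0$). Put $H_g(x_1,x_2)=\sum_{i=0}^g(x_1x_2)^i(2\mu_{4g+2-4i}+\mu_{4g-4i}(x_1+x_2))$ and $H_{g-1}(x_1,x_2)=\sum_{i=0}^{g-1}(x_1x_2)^i(2\tilde\mu_{4g-2-4i}+\tilde\mu_{4g-4-4i}(x_1+x_2))$. Then $$H_g(x_1,x_2)=(x_1-\alpha)(x_2-\alpha)H_{g-1}(x_1,x_2)+\alpha(x_1-x_2)^2\sum_{i=0}^{g-1}\tilde\mu_{4g-4-4i}x_1^ix_2^i.$$ *)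

(* Defs.v *)
From HB Require Import structures.
From mathcomp Require Import all_boot all_order all_algebra.
From mathcomp Require Import reals.
From mathcomp.real_closed Require Import complex.
Set Implicit Arguments. Unset Strict Implicit. Unset Printing Implicit Defensive.
Import Order.TTheory GRing.Theory Num.Theory.
Local Open Scope ring_scope.

(* Coefficient convention of the paper: for a polynomial
   p(x) = \sum_i c_(N - 2 i) x^i, the coefficient with index k is
   c_k = p`_((N - k)/2) when k is even and k <= N, and 0 otherwise
   (coefficients of p beyond its degree are 0 automatically). *)
Definition mu_coef (C : ringType) (p : {poly C}) (N k : nat) : C :=
  if odd k || (N < k)%N then 0 else p`_((N - k)./2).

Definition fgm1 (C : comRingType) (g : nat) (a : 'I_(2 * g - 1) -> C) : {poly C} :=
  \prod_(j < 2 * g - 1) ('X - (a j)%:P).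

Definition fg (C : comRingType) (g : nat) (al : C) (a : 'I_(2 * g - 1) -> C) : {poly C} :=
  ('X - al%:P) ^+ 2 * fgm1 a.

Definition mu (C : comRingType) (g : nat) (al : C) (a : 'I_(2 * g - 1) -> C) (k : nat) : C :=
  mu_coef (fg al a) (4 * g + 2) k.
Definition mut (C : comRingType) (g : nat) (a : 'I_(2 * g - 1) -> C) (k : nat) : C :=
  mu_coef (fgm1 a) (4 * g - 2) k.

Definition Hg (C : comRingType) (g : nat) (al : C) (a : 'I_(2 * g - 1) -> C) (x1 x2 : C) : C :=
  \sum_(0 <= i < g.+1) (x1 * x2) ^+ i *
     (2 * mu al a (4 * g + 2 - 4 * i) + mu al a (4 * g - 4 * i) * (x1 + x2)).

Definition Hgm1 (C : comRingType) (g : nat) (a : 'I_(2 * g - 1) -> C) (x1 x2 : C) : C :=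
  \sum_(0 <= i < g) (x1 * x2) ^+ i *
     (2 * mut a (4 * g - 2 - 4 * i) + mut a (4 * g - 4 - 4 * i) * (x1 + x2)).

(* Main.v *)
Require Import Defs.
From HB Require Import structures.
From mathcomp Require Import all_boot all_order all_algebra.
From mathcomp Require Import reals.
From mathcomp.real_closed Require Import complex.
From mathcomp Require Import zify ring.
Import Order.TTheory GRing.Theory Num.Theory.
Local Open Scope ring_scope.

Lemma mu_coefE (C : ringType) (p : {poly C}) N k M j :
  N = (2 * M)%N -> k = (2 * M - 2 * j)%N -> (j <= M)%N -> mu_coef p N k = p`_j.
Proof.
move=> -> -> hj; rewrite /mu_coef -mulnBr oddM /= ifF.
  by rewrite -mulnBr subKn // mul2n doubleK.
by apply/negbTE; rewrite -leqNgt; lia.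
Qed.

Lemma fg_coef (C : comRingType) (p : {poly C}) (al : C) k :
  (('X - al%:P) ^+ 2 * p)`_k =
  (if (k < 2)%N then 0 else p`_(k - 2)) - 2 * al * (if k == 0%N then 0 else p`_k.-1)
  + al ^+ 2 * p`_k.
Proof.
have -> : ('X - al%:P) ^+ 2 * p =
   'X^2 * p - (2 * al)%:P * ('X * p) + (al ^+ 2)%:P * p.
  rewrite ?rmorphM ?rmorphXn ?rmorphMn /= ?polyC1; ring.
by rewrite coefD coefB !coefCM coefXM coefXnM.
Qed.

Theorem lemma10 (R : realType) (g : nat) (hg : (1 <= g)%N)
  (al : R[i]) (a : 'I_(2 * g - 1) -> R[i]) (x1 x2 : R[i]) :
  Hg al a x1 x2 =
    (x1 - al) * (x2 - al) * Hgm1 a x1 x2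
    + al * (x1 - x2) ^+ 2 * \sum_(0 <= i < g) mut a (4 * g - 4 - 4 * i) * x1 ^+ i * x2 ^+ i.
Proof.
set p := fgm1 a.
set c := fun j => p`_j.
have hsz : size p = (2 * g)%N.
  rewrite /p /fgm1 size_prod_XsubC /index_enum unlock /= -enumT size_enum_ord; lia.
have c2g : c (2 * g)%N = 0 by rewrite /c nth_default ?hsz.
have c2g1 : c (2 * g).+1 = 0 by rewrite /c nth_default ?hsz.
set s := x1 * x2; set t := x1 + x2.
pose G i := if i is j.+1 then s ^+ i * (2 * c (2 * j)%N - 4 * al * c (2 * j).+1
              + t * c (2 * j).+1) else 0.
pose K i := s ^+ i * (2 * al ^+ 2 * c (2 * i)%N - 2 * al * t * c (2 * i)%N
              + al ^+ 2 * t * c (2 * i).+1).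
have LHS : Hg al a x1 x2 = \sum_(0 <= i < g.+1) (G i + K i).
  rewrite /Hg; apply: eq_big_nat => i /andP[_ hi].
  rewrite /mu (@mu_coefE _ _ (4 * g + 2) (4 * g + 2 - 4 * i) (2 * g + 1) (2 * i)) -?/s -?/t;
    try lia.
  rewrite (@mu_coefE _ _ (4 * g + 2) (4 * g - 4 * i) (2 * g + 1) (2 * i + 1)); try lia.
  rewrite /fg -/p !fg_coef /G /K /c.
  case: i hi => [|i] hi.
    rewrite /= !addn1 /=; ring.
  have e1 : (2 * i.+1 < 2)%N = false by lia.
  have e2 : (2 * i.+1 + 1 < 2)%N = false by lia.
  have e3 : (2 * i.+1 == 0)%N = false by lia.
  have e4 : (2 * i.+1 + 1 == 0)%N = false by lia.
  rewrite e1 e2 e3 e4.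
  have -> : (2 * i.+1 - 2 = 2 * i)%N by lia.
  have -> : (2 * i.+1 + 1 - 2 = (2 * i).+1)%N by lia.
  have -> : ((2 * i.+1).-1 = (2 * i).+1)%N by lia.
  have -> : ((2 * i.+1 + 1).-1 = (2 * i.+1))%N by lia.
  rewrite !addn1. ring.
have Kg : K g = 0 by rewrite /K c2g c2g1; ring.
rewrite LHS big_split /= big_nat_recl // big_nat_recr //= Kg addr0 add0r.
rewrite -big_split /= /Hgm1 !mulr_sumr -big_split /=.
apply: eq_big_nat => i /andP[_ hi].
rewrite /mut (@mu_coefE _ _ (4 * g - 2) (4 * g - 2 - 4 * i) (2 * g - 1) (2 * i)); try lia.
rewrite (@mu_coefE _ _ (4 * g - 2) (4 * g - 4 - 4 * i) (2 * g - 1) (2 * i + 1)); try lia.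
rewrite /K /c /s /t -/p addn1 exprS exprMn.
ring.
Qed.
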